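(* For every integer $m\ge1$, $$p^{(2m)}=\sum_{a=0}^{m-1}q^{(1-2m)a}\begin{bmatrix}m-1\\ a\end{bmatrix}_{q^2}g^{(2m-2a)},\qquad p^{(2m-1)}=\sum_{a=0}^{m-1}q^{(3-2m)a}\begin{bmatrix}m-1\\ a\end{bmatrix}_{q^2}g^{(2m-2a-1)}.$$ In particular, $p^{(n)}(\kappa)\in\mathbb Z[q,q^{-1}]$ for all $n\ge0$ and all $\kappa=[2\ell]$ with $\ell\in\mathbb Z$.
   Context: $q$ is an indeterminate, $[n]=\frac{q^n-q^{-n}}{q-q^{-1}}$ for $n\in\mathbb Z$, $[n]!=[1]\cdots[n]$, $[0]!=1$. For $0\le a\le N$, $\begin{bmatrix}N\\ a\end{bmatrix}_{q^2}$ denotes the balanced Gaussian binomial coefficient in $q^2$, i.e. $\frac{[N]_{q^2}!}{[a]_{q^2}![N-a]_{q^2}!}$ with $[k]_{q^2}=\frac{q^{2k}-q^{-2k}}{q^2-q^{-2}}$. The polynomials $p_n(x)\in\mathbb Q(q)[x]$ are defined by $p_0=1$, $p_n=0$ for $n<0$, $p_{n+1}=x\,p_n+q^{1-2n}[n][n-1]p_{n-1}$ ($n\ge0$); $p^{(n)}=p_n/[n]!$. The polynomials $g_n(x)$ are $g_{2m}(x)=\prod_{i=0}^{m-1}(x^2-[2i]^2)$ and $g_{2m+1}(x)=x\prod_{i=1}^m(x^2-[2i]^2)$; $g^{(n)}=g_n/[n]!$. *)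

(* Defs.v *)
From HB Require Import structures.
From mathcomp Require Import all_boot all_order all_algebra.
Set Implicit Arguments. Unset Strict Implicit. Unset Printing Implicit Defensive.
Import Order.TTheory GRing.Theory Num.Theory.
Local Open Scope ring_scope.

Definition K : fieldType := {fraction {poly rat}}.
Definition q : K := @FracField.tofrac {poly rat} (polyX rat).

Definition qint (n : int) : K := (q ^ n - q ^ (- n)) / (q - q^-1).
Definition qfact (n : nat) : K := \prod_(1 <= i < n.+1) qint i%:Z.

Definition qint2 (n : int) : K :=
  ((q ^+ 2) ^ n - (q ^+ 2) ^ (- n)) / (q ^+ 2 - (q ^+ 2)^-1).
Definition qfact2 (n : nat) : K := \prod_(1 <= i < n.+1) qint2 i%:Z.
Definition qbin2 (N a : nat) : K := qfact2 N / (qfact2 a * qfact2 (N - a)).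

Fixpoint p_seq (n : nat) : {poly K} :=
  match n with
  | 0%N => 1
  | m.+1 =>
    match m with
    | 0%N => 'X
    | k.+1 => 'X * p_seq m
              + (q ^ (1 - 2 * (k.+1)%:Z) * qint (k.+1)%:Z * qint k%:Z)%:P * p_seq k
    end
  end.

Definition p_div (n : nat) : {poly K} := (qfact n)^-1 *: p_seq n.

Definition g_seq (n : nat) : {poly K} :=
  if odd n then 'X * \prod_(1 <= i < (n./2).+1) ('X ^+ 2 - (qint (2 * i%:Z) ^+ 2)%:P)
  else \prod_(0 <= i < n./2) ('X ^+ 2 - (qint (2 * i%:Z) ^+ 2)%:P).

Definition g_div (n : nat) : {poly K} := (qfact n)^-1 *: g_seq n.

Definition in_Zqqinv (x : K) : Prop :=
  exists (k : nat) (c : {poly int}),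
    x = (map_poly (fun z : int => z%:~R : K) c).[q] * q ^- k.

(* Main.v *)
Require Import Defs.
From HB Require Import structures.
From mathcomp Require Import all_boot all_order all_algebra.
From mathcomp Require Import ring zify.
Import Order.TTheory GRing.Theory Num.Theory.
Local Open Scope ring_scope.

Section Gen.
Variables (F : fieldType) (q : F).
Hypothesis q0 : q != 0.
Hypothesis qn1 : forall n, (0 < n)%N -> q ^+ n != 1.

Definition qintF (n : int) : F := (q ^ n - q ^ (- n)) / (q - q^-1).
Definition qfactF (n : nat) : F := \prod_(1 <= i < n.+1) qintF i%:Z.
Definition qint2F (n : int) : F :=
  ((q ^+ 2) ^ n - (q ^+ 2) ^ (- n)) / (q ^+ 2 - (q ^+ 2)^-1).
Definition qfact2F (n : nat) : F := \prod_(1 <= i < n.+1) qint2F i%:Z.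
Definition qbin2F (N a : nat) : F := qfact2F N / (qfact2F a * qfact2F (N - a)).
Fixpoint p_seqF (n : nat) : {poly F} :=
  match n with
  | 0%N => 1
  | m.+1 =>
    match m with
    | 0%N => 'X
    | k.+1 => 'X * p_seqF m
              + (q ^ (1 - 2 * (k.+1)%:Z) * qintF (k.+1)%:Z * qintF k%:Z)%:P * p_seqF k
    end
  end.
Definition p_divF (n : nat) : {poly F} := (qfactF n)^-1 *: p_seqF n.
Definition g_seqF (n : nat) : {poly F} :=
  if odd n then 'X * \prod_(1 <= i < (n./2).+1) ('X ^+ 2 - (qintF (2 * i%:Z) ^+ 2)%:P)
  else \prod_(0 <= i < n./2) ('X ^+ 2 - (qintF (2 * i%:Z) ^+ 2)%:P).
Definition g_divF (n : nat) : {poly F} := (qfactF n)^-1 *: g_seqF n.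

Lemma h2 : q * q - 1 != 0.
Proof. by rewrite subr_eq0 -expr2 qn1. Qed.
Lemma h4 : (q * q) ^+ 2 - 1 != 0.
Proof. by rewrite subr_eq0 -expr2 -exprM qn1. Qed.
Lemma qX0 n : q ^+ n != 0.
Proof. by rewrite expf_neq0. Qed.
Lemma qden : q - q^-1 != 0.
Proof.
rewrite subr_eq0; apply/negP=> /eqP h.
have : q ^+ 2 = 1 by rewrite expr2 {2}h mulfV.
by move/eqP; apply/negP; exact: qn1.
Qed.
Lemma qden2 : q ^+ 2 - (q ^+ 2)^-1 != 0.
Proof.
rewrite subr_eq0; apply/negP=> /eqP h.
have : q ^+ 4 = 1 by rewrite (_ : 4 = 2 + 2)%N // exprD {2}h mulfV // qX0.
by move/eqP; apply/negP; exact: qn1.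
Qed.

Lemma qintE (n : nat) : qintF n%:Z = (q ^+ n - (q ^+ n)^-1) / (q - q^-1).
Proof. by rewrite /qintF -exprnP -exprnN. Qed.
Lemma qint2E (n : nat) : qint2F n%:Z = (q ^+ (2 * n) - (q ^+ (2 * n))^-1) / (q ^+ 2 - (q ^+ 2)^-1).
Proof. by rewrite /qint2F -exprnP -exprnN -exprM. Qed.

Lemma qint_neq0 (n : nat) : (0 < n)%N -> qintF n%:Z != 0.
Proof.
move=> n0; rewrite qintE; apply: mulf_neq0; last by rewrite invr_neq0 ?qden.
rewrite subr_eq0; apply/negP=> /eqP h.
have : q ^+ (2 * n) = 1 by rewrite mulnC exprM expr2 {2}h mulfV // qX0.
move/eqP; apply/negP; apply: qn1; by rewrite muln_gt0.
Qed.
Lemma qint2_neq0 (n : nat) : (0 < n)%N -> qint2F n%:Z != 0.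
Proof.
move=> n0; rewrite qint2E; apply: mulf_neq0; last by rewrite invr_neq0 ?qden2.
rewrite subr_eq0; apply/negP=> /eqP h.
have : q ^+ (2 * (2 * n)) = 1.
  by rewrite (mulnC 2%N (2 * n)%N) exprM expr2 {2}h mulfV // qX0.
move/eqP; apply/negP; apply: qn1; by rewrite !muln_gt0.
Qed.

Lemma qfactS n : qfactF n.+1 = qfactF n * qintF n.+1%:Z.
Proof. by rewrite /qfactF big_nat_recr. Qed.
Lemma qfact2S n : qfact2F n.+1 = qfact2F n * qint2F n.+1%:Z.
Proof. by rewrite /qfact2F big_nat_recr. Qed.
Lemma qfact_neq0 n : qfactF n != 0.
Proof.
elim: n => [|n IH]; first by rewrite /qfactF big_nil oner_neq0.
by rewrite qfactS mulf_neq0 // qint_neq0.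
Qed.
Lemma qfact2_neq0 n : qfact2F n != 0.
Proof.
elim: n => [|n IH]; first by rewrite /qfact2F big_nil oner_neq0.
by rewrite qfact2S mulf_neq0 // qint2_neq0.
Qed.
Lemma qint0 : qintF 0 = 0.
Proof. by rewrite /qintF subrr mul0r. Qed.
Lemma qint1 : qintF 1 = 1.
Proof. by rewrite /qintF expr1z divff // qden. Qed.

Ltac side := rewrite ?andbT; repeat (apply/andP; split); try assumption.

Lemma p_rec n : qintF n.+2%:Z *: p_divF n.+2 =
  'X * p_divF n.+1 + (q ^ (1 - 2 * (n.+1)%:Z) * qintF n%:Z) *: p_divF n.
Proof.
rewrite /p_divF.
have -> : p_seqF n.+2 = 'X * p_seqF n.+1 +
   (q ^ (1 - 2 * (n.+1)%:Z) * qintF (n.+1)%:Z * qintF n%:Z) *: p_seqF n.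
  by rewrite /= mul_polyC.
rewrite !scalerDr !scalerA -scalerAr.
have e0 := qfact_neq0 n; have e1 := @qint_neq0 n.+1 (ltn0Sn n); have e2 := @qint_neq0 n.+2 (ltn0Sn n.+1).
rewrite !qfactS.
set a := qfactF n; set b := qintF n.+1%:Z; set c := qintF n.+2%:Z.
congr (_ *: _ + _ *: _); field; side.
Qed.

Lemma g_odd k : g_seqF (2 * k).+1 = 'X * \prod_(1 <= i < k.+1) ('X ^+ 2 - (qintF (2 * i%:Z) ^+ 2)%:P).
Proof. by rewrite /g_seqF /= mul2n odd_double uphalf_double. Qed.
Lemma g_even k : g_seqF (2 * k) = \prod_(0 <= i < k) ('X ^+ 2 - (qintF (2 * i%:Z) ^+ 2)%:P).
Proof. by rewrite /g_seqF /= mul2n odd_double doubleK. Qed.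

Lemma gE1 k : g_seqF (2 * k.+1) = 'X * g_seqF (2 * k).+1.
Proof.
rewrite g_even g_odd big_nat_recl // mulr0 qint0 expr0n /= subr0 expr2 -mulrA.
by rewrite big_add1.
Qed.
Lemma gE2 k : g_seqF (2 * k.+1).+1 = 'X * g_seqF (2 * k.+1) - (qintF (2 * k.+1%:Z) ^+ 2)%:P * g_seqF (2 * k).+1.
Proof.
rewrite gE1 !g_odd big_nat_recr //=.
ring.
Qed.

Lemma gd0 : 'X * g_divF 0 = g_divF 1.
Proof.
rewrite /g_divF.
have -> : qfactF 0 = 1 by rewrite /qfactF big_geq.
have -> : qfactF 1 = 1 by rewrite /qfactF big_nat1 qint1.
rewrite /g_seqF /= !big_geq // invr1 !scale1r mulr1.
by [].
Qed.

Lemma cast2 k : (2 * k.+1%:Z) = ((2 * k).+2)%N%:Z.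
Proof. by rewrite natz -PoszM; congr Posz; lia. Qed.

Lemma gd1 k : 'X * g_divF (2 * k).+1 = qintF (2 * k).+2%:Z *: g_divF (2 * k.+1).
Proof.
rewrite /g_divF gE1 -scalerAr scalerA; congr (_ *: _).
have -> : (2 * k.+1 = (2 * k).+2)%N by lia.
have e0 := qfact_neq0 (2 * k).+1; have e2 := @qint_neq0 (2 * k).+2 (ltn0Sn _).
by rewrite [qfactF (2 * k).+2]qfactS; field; side.
Qed.

Lemma gd2 k : 'X * g_divF (2 * k.+1) =
  qintF (2 * k).+3%:Z *: g_divF (2 * k.+1).+1 + qintF (2 * k).+2%:Z *: g_divF (2 * k).+1.
Proof.
rewrite /g_divF -scalerAr.
have -> : 'X * g_seqF (2 * k.+1) = g_seqF (2 * k.+1).+1 + (qintF (2 * k.+1%:Z) ^+ 2) *: g_seqF (2 * k).+1.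
  by rewrite gE2 -mul_polyC; ring.
rewrite scalerDr !scalerA cast2.
have -> : (2 * k.+1 = (2 * k).+2)%N by lia.
have e0 := qfact_neq0 (2 * k).+1; have e2 := @qint_neq0 (2 * k).+2 (ltn0Sn _).
have e3 := @qint_neq0 (2 * k).+3 (ltn0Sn _).
rewrite [qfactF (2 * k).+3]qfactS [qfactF (2 * k).+2]qfactS.
by congr (_ *: _ + _ *: _); field; side.
Qed.

Definition QI (x : F) := (x - x^-1) / (q - q^-1).
Definition QQ (x : F) := (x ^+ 2 - (x ^+ 2)^-1) / (q ^+ 2 - (q ^+ 2)^-1).

Lemma qne1 (P : F) (n : nat) : (0 < n)%N -> P = q ^+ n -> P - 1 != 0.
Proof. by move=> n0 ->; rewrite subr_eq0 qn1. Qed.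

Definition cF (m a : nat) : F := q ^ ((1 - 2 * m%:Z) * a%:Z) * qbin2F (m - 1) a.
Definition dF (m a : nat) : F := q ^ ((3 - 2 * m%:Z) * a%:Z) * qbin2F (m - 1) a.

Lemma qz_sub (e e0 : int) (n : nat) : e = e0 - n%:Z -> q ^ e = q ^ e0 * (q ^+ n)^-1.
Proof. by move->; rewrite expfzDr // -exprnN. Qed.
Lemma qz_neg (e : int) (n : nat) : e = - n%:Z -> q ^ e = (q ^+ n)^-1.
Proof. by move->; rewrite -exprnN. Qed.
Lemma qz_add (e e0 : int) (n : nat) : e = e0 + n%:Z -> q ^ e = q ^ e0 * q ^+ n.
Proof. by move->; rewrite expfzDr // -exprnP. Qed.
Lemma expr_cn (x : F) m n : x ^+ (m * n) = (x ^+ n) ^+ m.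
Proof. by rewrite mulnC exprM. Qed.
Ltac neq1 n := apply: (@qne1 _ n); [lia | rewrite ?(exprD, exprS, expr_cn, expr0); ring].

Lemma qbin2_n0 n : qbin2F n 0 = 1.
Proof.
rewrite /qbin2F subn0 (_ : qfact2F 0 = 1) ?mul1r ?divff ?qfact2_neq0 //.
by rewrite /qfact2F big_geq.
Qed.
Lemma qbin2_nn n : qbin2F n n = 1.
Proof.
rewrite /qbin2F subnn (_ : qfact2F 0 = 1) ?mulr1 ?divff ?qfact2_neq0 //.
by rewrite /qfact2F big_geq.
Qed.
Lemma cF0 m : cF m 0 = 1.
Proof. by rewrite /cF mulr0 expr0z qbin2_n0 mulr1. Qed.
Lemma dF0 m : dF m 0 = 1.
Proof. by rewrite /dF mulr0 expr0z qbin2_n0 mulr1. Qed.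

Lemma qbin_rel1 x y : qbin2F (x + y).+1 x.+1 * qint2F x.+1%:Z = qbin2F (x + y) x * qint2F (x + y).+1%:Z.
Proof.
rewrite /qbin2F (_ : ((x + y).+1 - x.+1 = y)%N); last by lia.
rewrite (_ : ((x + y) - x = y)%N); last by lia.
rewrite !qfact2S.
have := qfact2_neq0 x; have := qfact2_neq0 y; have := qfact2_neq0 (x + y).
have := @qint2_neq0 x.+1 (ltn0Sn _); have := @qint2_neq0 (x + y).+1 (ltn0Sn _).
move=> *; field; side.
Qed.
Lemma qbin_rel2 x y : qbin2F (x + y).+1 x.+1 * qint2F x.+1%:Z = qbin2F (x + y).+1 x * qint2F y.+1%:Z.
Proof.
rewrite /qbin2F (_ : ((x + y).+1 - x.+1 = y)%N); last by lia.
rewrite (_ : ((x + y).+1 - x = y.+1)%N); last by lia.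
rewrite !qfact2S.
have := qfact2_neq0 x; have := qfact2_neq0 y; have := qfact2_neq0 (x + y).
have := @qint2_neq0 x.+1 (ltn0Sn _); have := @qint2_neq0 y.+1 (ltn0Sn _).
move=> *; field; side.
Qed.

Lemma A0 M : cF M.+1 0 * qintF (2 * (M - 0)).+3%:Z = qintF (2 * M).+3%:Z * dF M.+2 0.
Proof. by rewrite cF0 dF0 subn0 mul1r mulr1. Qed.
Lemma B0 M : dF M.+2 0 * qintF (2 * (M.+1 - 0)).+2%:Z = qintF (2 * M).+4%:Z * cF M.+2 0.
Proof. by rewrite cF0 dF0 subn0 mul1r mulr1 (_ : (2 * M.+1).+2 = (2 * M).+4)%N //; lia. Qed.

Lemma B1 M a : (a <= M)%N ->
  dF M.+2 a.+1 * qintF (2 * (M - a)).+2%:Z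
  + (q ^ (1 - 2 * ((2 * M).+3)%:Z) * qintF (2 * M).+2%:Z) * cF M.+1 a
  = qintF (2 * M).+4%:Z * cF M.+2 a.+1.
Proof.
move=> aM; have [b ->] : exists b, M = (a + b)%N by exists (M - a)%N; lia.
rewrite /cF /dF !subSS !subn0 (_ : (a + b - a = b)%N); last by lia.
set W := q ^ ((1 - 2 * (a + b).+1%:Z) * a%:Z).
rewrite (@qz_sub ((3 - 2 * (a + b).+2%:Z) * a.+1%:Z) ((1 - 2 * (a + b).+1%:Z) * a%:Z) (2 * a + 2 * b + 1)); last by nia.
rewrite (@qz_sub ((1 - 2 * (a + b).+2%:Z) * a.+1%:Z) ((1 - 2 * (a + b).+1%:Z) * a%:Z) (4 * a + 2 * b + 3)); last by nia.
rewrite (@qz_neg (1 - 2 * ((2 * (a + b)).+3)%:Z) (4 * a + 4 * b + 5)); last by nia.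
rewrite -/W.
have hB := qbin_rel1 a b.
set Bn := qbin2F (a + b).+1 a.+1 in hB *.
set Bo := qbin2F (a + b) a in hB *.
have e0 := @qint2_neq0 a.+1 (ltn0Sn _).
have -> : Bn = Bo * qint2F (a + b).+1%:Z / qint2F a.+1%:Z by rewrite -hB mulfK.
rewrite !qintE !qint2E.
rewrite ?(exprD, exprS, expr_cn, expr0).
have W0 : W != 0 by rewrite expfz_neq0.
have := qX0 a; have := qX0 b; have := h2; have := h4.
move=> *; field; side.
all: first [neq1 4%N | neq1 (4 * a + 4)%N].
Qed.


Lemma A1 M a : (a < M)%N ->
  cF M.+1 a.+1 * qintF (2 * (M - a.+1)).+3%:Z
  + (cF M.+1 a * qintF (2 * (M - a)).+2%:Z
     + (q ^ (1 - 2 * ((2 * M).+2)%:Z) * qintF (2 * M).+1%:Z) * dF M.+1 a)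
  = qintF (2 * M).+3%:Z * dF M.+2 a.+1.
Proof.
move=> aM; have [b ->] : exists b, M = (a + b).+1%N by exists (M - a.+1)%N; lia.
rewrite /cF /dF !subSS !subn0 (_ : (a + b - a = b)%N); last by lia.
rewrite (_ : ((a + b).+1 - a = b.+1)%N); last by lia.
set W := q ^ ((1 - 2 * (a + b).+2%:Z) * a%:Z).
rewrite (@qz_sub ((1 - 2 * (a + b).+2%:Z) * a.+1%:Z) ((1 - 2 * (a + b).+2%:Z) * a%:Z) (2 * a + 2 * b + 3)); last by nia.
rewrite (@qz_add ((3 - 2 * (a + b).+2%:Z) * a%:Z) ((1 - 2 * (a + b).+2%:Z) * a%:Z) (2 * a)); last by nia.
rewrite (@qz_sub ((3 - 2 * (a + b).+3%:Z) * a.+1%:Z) ((1 - 2 * (a + b).+2%:Z) * a%:Z) (2 * a + 2 * b + 3)); last by nia.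
rewrite (@qz_neg (1 - 2 * ((2 * (a + b).+1).+2)%:Z) (4 * a + 4 * b + 7)); last by nia.
rewrite -/W.
have hB1 := qbin_rel2 a b.
have hB2 := qbin_rel1 a b.+1; rewrite addnS in hB2.
set B1 := qbin2F (a + b).+1 a.+1 in hB1 *.
set B2 := qbin2F (a + b).+2 a.+1 in hB2 *.
set Bo := qbin2F (a + b).+1 a in hB1 hB2 *.
have e0 := @qint2_neq0 a.+1 (ltn0Sn _).
have -> : B1 = Bo * qint2F b.+1%:Z / qint2F a.+1%:Z by rewrite -hB1 mulfK.
have -> : B2 = Bo * qint2F (a + b).+2%:Z / qint2F a.+1%:Z by rewrite -hB2 mulfK.
rewrite !qintE !qint2E.
rewrite ?(exprD, exprS, expr_cn, expr0).
have W0 : W != 0 by rewrite expfz_neq0.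
have := qX0 a; have := qX0 b; have := h2; have := h4.
move=> *; field; side.
all: first [neq1 4%N | neq1 (4 * a + 4)%N].
Qed.

Lemma A2 M :
  cF M.+1 M * qintF (2 * (M - M)).+2%:Z
  + (q ^ (1 - 2 * ((2 * M).+2)%:Z) * qintF (2 * M).+1%:Z) * dF M.+1 M
  = qintF (2 * M).+3%:Z * dF M.+2 M.+1.
Proof.
rewrite /cF /dF !subSS !subn0 subnn !qbin2_nn !mulr1.
set W := q ^ ((1 - 2 * M.+1%:Z) * M%:Z).
rewrite (@qz_add ((3 - 2 * M.+1%:Z) * M%:Z) ((1 - 2 * M.+1%:Z) * M%:Z) (2 * M)); last by nia.
rewrite (@qz_sub ((3 - 2 * M.+2%:Z) * M.+1%:Z) ((1 - 2 * M.+1%:Z) * M%:Z) (2 * M + 1)); last by nia.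
rewrite (@qz_neg (1 - 2 * ((2 * M).+2)%:Z) (4 * M + 3)); last by nia.
rewrite -/W.
rewrite !qintE.
rewrite ?(exprD, exprS, expr_cn, expr0).
have W0 : W != 0 by rewrite expfz_neq0.
have := qX0 M; have := h2; have := h4.
move=> *; field; side.
Qed.


Definition PE M := p_divF (2 * M.+1) =
  \sum_(0 <= a < M.+1) cF M.+1 a *: g_divF (2 * (M - a).+1).
Definition PO M := p_divF (2 * M).+1 =
  \sum_(0 <= a < M.+1) dF M.+1 a *: g_divF (2 * (M - a)).+1.

Lemma scaleAg a b n : a *: (b *: g_divF n) = (a * b) *: g_divF n.
Proof. exact: scalerA. Qed.

Lemma PO_step M : PE M -> PO M -> PO M.+1.
Proof.
rewrite /PE /PO => hE hO.
have e3 := @qint_neq0 (2 * M).+3 (ltn0Sn _).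
rewrite (_ : (2 * M.+1).+1 = (2 * M).+3)%N; last by lia.
apply: (scalerI e3); rewrite p_rec.
rewrite (_ : 2 * M.+1 = (2 * M).+2)%N in hE; last by lia.
rewrite hE hO mulr_sumr scaler_sumr.
under eq_bigr => a _ do rewrite -scalerAr gd2 scalerDr !scaleAg.
rewrite big_split /=.
under [X in _ + _ + X]eq_bigr => a _ do rewrite scaleAg.
rewrite -addrA -big_split /=.
under [X in _ + X]eq_bigr => a _ do rewrite -scalerDl.
rewrite big_nat_recl // big_nat_recr //=.
rewrite scaler_sumr big_nat_recl //.
under [X in _ = _ + X]eq_bigr => a _ do rewrite scaleAg subSS.
rewrite big_nat_recr //= scaleAg.
rewrite A0 A2 !subn0.
rewrite -!addrA; congr (_ + _).
rewrite !addrA; congr (_ + _).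
rewrite -big_split; apply: eq_big_nat => i /andP [_ hi].
rewrite (_ : (2 * (M - i.+1).+1).+1 = (2 * (M - i)).+1)%N; last by lia.
by rewrite /= -scalerDl A1.
Qed.

Lemma PE_step M : PE M -> PO M.+1 -> PE M.+1.
Proof.
rewrite /PE /PO => hE hO.
have e4 := @qint_neq0 (2 * M).+4 (ltn0Sn _).
rewrite (_ : (2 * M.+2) = (2 * M).+4)%N; last by lia.
apply: (scalerI e4); rewrite p_rec.
rewrite (_ : 2 * M.+1 = (2 * M).+2)%N in hE; last by lia.
rewrite (_ : (2 * M.+1).+1 = (2 * M).+3)%N in hO; last by lia.
rewrite hE hO mulr_sumr !scaler_sumr.
under eq_bigr => a _ do rewrite -scalerAr gd1 !scaleAg.
under [X in _ + X]eq_bigr => a _ do rewrite scaleAg.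
under [X in _ = X]eq_bigr => a _ do rewrite scaleAg.
rewrite big_nat_recl // [X in _ = X]big_nat_recl //.
under eq_bigr => a _ do rewrite subSS.
under [X in _ = _ + X]eq_bigr => a _ do rewrite subSS.
rewrite B0 -addrA; congr (_ + _).
rewrite -big_split; apply: eq_big_nat => i /andP [_ hi].
by rewrite /= -scalerDl B1.
Qed.

Lemma p1g1 : p_divF 1 = g_divF 1.
Proof. by rewrite /p_divF /g_divF /g_seqF /= big_geq // mulr1. Qed.

Lemma PO0 : PO 0.
Proof. by rewrite /PO big_nat1 dF0 scale1r sub0n !muln0 p1g1. Qed.

Lemma PE0 : PE 0.
Proof.
rewrite /PE big_nat1 cF0 scale1r sub0n muln1.
have e2 := @qint_neq0 2 (ltn0Sn _).
apply: (scalerI e2).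
rewrite p_rec qint0 mulr0 scale0r addr0 p1g1.
by have := gd1 0; rewrite muln0 muln1 => ->.
Qed.

Lemma PEO M : PE M /\ PO M.
Proof.
elim: M => [|M [hE hO]]; first by split; [exact: PE0 | exact: PO0].
have hO' := PO_step _ hE hO.
by split; [exact: PE_step _ hE hO' | exact: hO'].
Qed.


Definition in_Z (x : F) : Prop :=
  exists (k : nat) (c : {poly int}),
    x = (map_poly (fun z : int => z%:~R : F) c).[q] * q ^- k.

Local Notation mp := (map_poly (fun z : int => z%:~R : F)).

Lemma inZ_int (z : int) : in_Z z%:~R.
Proof. by exists 0%N, z%:P; rewrite map_polyC hornerC expr0 invr1 mulr1. Qed.
Lemma inZ0 : in_Z 0.
Proof. by have := inZ_int 0. Qed.
Lemma inZ1 : in_Z 1.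
Proof. by have := inZ_int 1. Qed.
Lemma inZ_qX n : in_Z (q ^+ n).
Proof. by exists 0%N, ('X ^+ n); rewrite rmorphXn /= map_polyX hornerXn expr0 invr1 mulr1. Qed.
Lemma inZ_qV n : in_Z ((q ^+ n)^-1).
Proof. by exists n, 1; rewrite rmorph1 hornerC mul1r. Qed.
Lemma inZ_mul x y : in_Z x -> in_Z y -> in_Z (x * y).
Proof.
move=> [k1 [c1 ->]] [k2 [c2 ->]]; exists (k1 + k2)%N, (c1 * c2).
rewrite rmorphM /= hornerM exprD invfM; ring.
Qed.
Lemma inZ_add x y : in_Z x -> in_Z y -> in_Z (x + y).
Proof.
move=> [k1 [c1 ->]] [k2 [c2 ->]]; exists (k1 + k2)%N, (c1 * 'X ^+ k2 + c2 * 'X ^+ k1).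
rewrite rmorphD !rmorphM !rmorphXn /= map_polyX hornerD !hornerM !hornerXn exprD invfM.
have := qX0 k1; have := qX0 k2; move=> *; field; side.
Qed.
Lemma inZ_opp x : in_Z x -> in_Z (- x).
Proof. by move=> [k [c ->]]; exists k, (- c); rewrite rmorphN /= hornerN mulNr. Qed.
Lemma inZ_sub x y : in_Z x -> in_Z y -> in_Z (x - y).
Proof. by move=> hx hy; apply: inZ_add => //; apply: inZ_opp. Qed.
Lemma inZ_qz (z : int) : in_Z (q ^ z).
Proof. by case: z => n; [exact: inZ_qX | exact: inZ_qV]. Qed.


Lemma qzD (m n : int) : q ^ (m + n) = q ^ m * q ^ n.
Proof. exact: expfzDr. Qed.
Lemma qzN (m : int) : q ^ (- m) = (q ^ m)^-1.
Proof. by rewrite invr_expz. Qed.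
Lemma qz2 (m : int) : q ^ (2 * m) = (q ^ m) ^+ 2.
Proof. by rewrite exprnP exprz_exp mulrC. Qed.
Lemma qzP (n : nat) : q ^ (Posz n) = q ^+ n.
Proof. by []. Qed.
Lemma qint2Fq (z : int) : qint2F z = (q ^ (2 * z) - q ^ (- (2 * z))) / (q ^+ 2 - (q ^+ 2)^-1).
Proof. by rewrite /qint2F !exprnP !exprz_exp mulrN mulrC. Qed.

Ltac qnorm := rewrite /qintF ?qint2Fq ?(opprD, opprK, mulrDr, mulrN, mulrBr, qzD, qzN, qz2, qzP, expr1z, expr0z);
  rewrite ?(exprD, exprS, expr_cn, expr0).

Lemma I1 (l : int) : qintF (2 * l) = qintF 2 * qint2F l.
Proof.
qnorm.
have := qden; have := qden2; have ul : q ^ l != 0 by rewrite expfz_neq0.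
have := h2; have := h4.
move=> *; field; side.
Qed.

Lemma I2 (l : int) (k : nat) : qintF (2 * l) ^+ 2 - qintF (2 * k.+1%:Z) ^+ 2
  = qintF 2 ^+ 2 * qint2F (l + k%:Z + 1) * qint2F (l + k%:Z - (2 * k).+1%:Z).
Proof.
qnorm.
have ul : q ^ l != 0 by rewrite expfz_neq0.
have := qX0 k; have := h2; have := h4.
move=> *; field; side.
Qed.

Lemma I3 (l : int) (k : nat) : qintF (2 * l) * (q ^+ (2 * k).+2 + (q ^+ (2 * k).+2)^-1)
  = qintF 2 * (qint2F (l + k%:Z + 1) + qint2F (l + k%:Z - (2 * k).+1%:Z)).
Proof.
qnorm.
have ul : q ^ l != 0 by rewrite expfz_neq0.
have := qX0 k; have := h2; have := h4.
move=> *; field; side.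
Qed.

Lemma I4 (j : nat) : qintF 2 * qint2F j%:Z = qintF j%:Z * (q ^+ j + (q ^+ j)^-1).
Proof.
qnorm.
have := qX0 j; have := h2; have := h4.
move=> *; field; side.
Qed.

Lemma I5 (N : int) (a : nat) : qint2F (N + 1) =
  q ^ (2 * a.+1%:Z) * qint2F (N - a%:Z) + q ^ (2 * (a%:Z - N)) * qint2F a.+1%:Z.
Proof.
qnorm.
have ul : q ^ N != 0 by rewrite expfz_neq0.
have := qX0 a; have := h2; have := h4.
move=> *; field; side.
Qed.


Definition Dp (N : int) (a : nat) : F := \prod_(0 <= j < a) qint2F (N - j%:Z).
Definition Cq (N : int) (a : nat) : F := Dp N a / qfact2F a.

Lemma qint2_0 : qint2F 0 = 0.
Proof. by rewrite /qint2F oppr0 subrr mul0r. Qed.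

Lemma Dp0 N : Dp N 0 = 1.
Proof. by rewrite /Dp big_geq. Qed.
Lemma Dp_recl N a : Dp (N + 1) a.+1 = qint2F (N + 1) * Dp N a.
Proof.
rewrite /Dp big_nat_recl // subr0; congr (_ * _).
apply: eq_bigr => j _; congr qint2F; rewrite intS; ring.
Qed.
Lemma Dp_recr N a : Dp N a.+1 = Dp N a * qint2F (N - a%:Z).
Proof. by rewrite /Dp big_nat_recr. Qed.
Lemma Dp_zero a : Dp 0 a.+1 = 0.
Proof. by rewrite /Dp big_nat_recl // subr0 qint2_0 mul0r. Qed.

Lemma Cq_pascal N a : Cq (N + 1) a.+1 =
  q ^ (2 * a.+1%:Z) * Cq N a.+1 + q ^ (2 * (a%:Z - N)) * Cq N a.
Proof.
rewrite /Cq Dp_recl Dp_recr qfact2S (I5 N a).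
have := qfact2_neq0 a; have := @qint2_neq0 a.+1 (ltn0Sn _).
move=> *; field; side.
Qed.

Lemma inZ_Cq a : forall N, in_Z (Cq N a).
Proof.
elim: a => [|a IH] N.
  by rewrite /Cq Dp0 /qfact2F big_geq // divr1; exact: inZ1.
have key : forall n : nat, in_Z (Cq n%:Z a.+1) /\ in_Z (Cq (- n%:Z) a.+1).
  elim=> [|n [IHp IHn]].
    by rewrite oppr0 /Cq Dp_zero mul0r; split; exact: inZ0.
  split.
    rewrite intS addrC Cq_pascal.
    by apply: inZ_add; apply: inZ_mul => //; apply: inZ_qz.
  have E : Cq (- n.+1%:Z) a.+1 = q ^ (- (2 * a.+1%:Z)) *
     (Cq (- n%:Z) a.+1 - q ^ (2 * (a%:Z - (- n.+1%:Z))) * Cq (- n.+1%:Z) a).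
    rewrite (_ : - n%:Z = - n.+1%:Z + 1); last by rewrite intS opprD addrAC subrr add0r.
    rewrite Cq_pascal addrK qzN mulrA mulVf ?mul1r // expfz_neq0 //.
  rewrite E; apply: inZ_mul; first exact: inZ_qz.
  by apply: inZ_sub => //; apply: inZ_mul => //; apply: inZ_qz.
case: N => n; first by case: (key n).
by rewrite NegzE; case: (key n.+1).
Qed.


Definition Tq (n : nat) : F := \prod_(1 <= j < n.+1) (q ^+ j + (q ^+ j)^-1).

Lemma inZ_T n : in_Z (Tq n).
Proof.
rewrite /Tq; apply: big_ind; [exact: inZ1 | exact: inZ_mul |].
by move=> j _; apply: inZ_add; [exact: inZ_qX | exact: inZ_qV].
Qed.

Lemma P_neq0 j : (0 < j)%N -> q ^+ j + (q ^+ j)^-1 != 0.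
Proof.
move=> j0; apply/negP => /eqP h.
have h1 : q ^+ j * q ^+ j + 1 = 0 by rewrite -[1](mulfV (qX0 j)) -mulrDr h mulr0.
have h1' : q ^+ j * q ^+ j = -1 by apply/eqP; rewrite -addr_eq0; apply/eqP.
have E4 : (j * 4 = (j + j) * 2)%N by lia.
have : q ^+ (j * 4) = 1 by rewrite E4 exprM exprD h1' sqrrN expr1n.
by move/eqP; apply/negP; apply: qn1; rewrite muln_gt0 j0.
Qed.

Lemma T_neq0 n : Tq n != 0.
Proof.
rewrite /Tq prodf_seq_neq0; apply/allP => j; rewrite mem_index_iota => /andP [j1 _] /=; exact: P_neq0.
Qed.

Lemma TS n : Tq n.+1 = Tq n * (q ^+ n.+1 + (q ^+ n.+1)^-1).
Proof. by rewrite /Tq big_nat_recr. Qed.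

Lemma qfactT n : qintF 2 ^+ n * qfact2F n = qfactF n * Tq n.
Proof.
elim: n => [|n IH]; first by rewrite /qfact2F /qfactF /Tq !big_geq // expr0 mulr1.
rewrite exprS qfact2S qfactS TS.
transitivity ((qintF 2 * qint2F n.+1%:Z) * (qintF 2 ^+ n * qfact2F n)); first ring.
by rewrite I4 IH; ring.
Qed.

Section Gval.
Variable l : int.
Local Notation x := (qintF (2 * l)).

Lemma gO k : g_seqF (2 * k.+1).+1 = g_seqF (2 * k).+1 * ('X ^+ 2 - (qintF (2 * k.+1%:Z) ^+ 2)%:P).
Proof. by rewrite !g_odd big_nat_recr //= mulrA. Qed.

Lemma g_odd_val k : (g_seqF (2 * k).+1).[x] = qintF 2 ^+ (2 * k).+1 * Dp (l + k%:Z) (2 * k).+1.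
Proof.
elim: k => [|k IH].
  rewrite muln0 /g_seqF /= big_geq // mulr1 hornerX expr1 addr0 /Dp big_nat1 subr0.
  exact: I1.
rewrite gO hornerM IH hornerD hornerN hornerXn hornerC.
rewrite (_ : (2 * k.+1).+1 = (2 * k).+3)%N; last by lia.
rewrite (_ : l + k.+1%:Z = l + k%:Z + 1); last by rewrite intS; ring.
rewrite Dp_recl [Dp _ (2 * k).+2]Dp_recr I2.
rewrite !exprS; ring.
Qed.

Lemma gdiv_odd k : (g_divF (2 * k).+1).[x] = Tq (2 * k).+1 * Cq (l + k%:Z) (2 * k).+1.
Proof.
rewrite /g_divF hornerZ g_odd_val /Cq.
have -> : Tq (2 * k).+1 = qintF 2 ^+ (2 * k).+1 * qfact2F (2 * k).+1 / qfactF (2 * k).+1.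
  by rewrite qfactT mulrAC mulfV ?mul1r // qfact_neq0.
set t := qintF 2 ^+ (2 * k).+1.
have := qfact_neq0 (2 * k).+1; have := qfact2_neq0 (2 * k).+1.
move=> *; field; side.
Qed.

Lemma gdiv_even k : (g_divF (2 * k.+1)).[x] =
  Tq (2 * k).+1 * (Cq (l + k%:Z + 1) (2 * k).+2 + Cq (l + k%:Z) (2 * k).+2).
Proof.
rewrite /g_divF hornerZ gE1 hornerM hornerX g_odd_val /Cq.
rewrite (_ : (2 * k.+1) = (2 * k).+2)%N; last by lia.
rewrite Dp_recl [Dp _ (2 * k).+2]Dp_recr.
have hT := qfactT (2 * k).+2; rewrite TS in hT.
have hI := I3 l k.
have eP := @P_neq0 (2 * k).+2 (ltn0Sn _).
have eT := T_neq0 (2 * k).+1.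
have e2 := @qint_neq0 2 (ltn0Sn _).
have ef := qfact_neq0 (2 * k).+2; have ef2 := qfact2_neq0 (2 * k).+2.
set P := q ^+ (2 * k).+2 + (q ^+ (2 * k).+2)^-1 in hT hI eP *.
set A := qint2F (l + k%:Z + 1) in hI *.
set B := qint2F (l + k%:Z - (2 * k).+1%:Z) in hI *.
set T1 := Tq (2 * k).+1 in hT eT *.
set f := qfactF (2 * k).+2 in hT ef *.
set f2 := qfact2F (2 * k).+2 in hT ef2 *.
set D := Dp (l + k%:Z) (2 * k).+1.
rewrite exprS in hT; set t := qintF 2 ^+ (2 * k).+1 in hT *.
have et : t != 0 by rewrite expf_neq0.
have -> : f = qintF 2 * t * f2 / (T1 * P) by rewrite hT mulfK // mulf_neq0.
have -> : x = qintF 2 * (A + B) / P by rewrite -hI mulfK.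
field; side; exact: mulf_neq0.
Qed.

Lemma inZ_g n : in_Z (g_divF n).[x].
Proof.
have hn := odd_double_half n.
case: (boolP (odd n)) hn => /= hodd hn.
  rewrite -hn add1n -mul2n gdiv_odd; apply: inZ_mul; [exact: inZ_T | exact: inZ_Cq].
move: hn; rewrite add0n -mul2n; case: (n./2) => [|k] <-.
  rewrite muln0 /g_divF /g_seqF /= /qfactF !big_geq // invr1 scale1r hornerC; exact: inZ1.
rewrite gdiv_even; apply: inZ_mul; first exact: inZ_T.
by apply: inZ_add; apply: inZ_Cq.
Qed.

End Gval.


Lemma Dp_fact a b : Dp (b + a)%N%:Z a * qfact2F b = qfact2F (b + a).
Proof.
elim: a => [|a IH]; first by rewrite Dp0 mul1r addn0.
rewrite addnS (_ : (b + a).+1%:Z = (b + a)%N%:Z + 1); last by rewrite intS addrC.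
rewrite Dp_recl -mulrA IH qfact2S; rewrite mulrC; congr (_ * _).
by congr (qint2F _); rewrite intS addrC.
Qed.

Lemma qbin_Cq M a : (a <= M)%N -> qbin2F M a = Cq M%:Z a.
Proof.
move=> aM; have [b ->] : exists b, M = (b + a)%N by exists (M - a)%N; lia.
rewrite /qbin2F /Cq addnK -Dp_fact.
have := qfact2_neq0 a; have := qfact2_neq0 b; move=> *; field; side.
Qed.

Lemma inZ_qbin M a : (a <= M)%N -> in_Z (qbin2F M a).
Proof. by move=> aM; rewrite qbin_Cq //; exact: inZ_Cq. Qed.

Lemma main2 n l : in_Z (p_divF n).[qintF (2 * l)].
Proof.
have hn := odd_double_half n.
case: (boolP (odd n)) hn => /= hodd hn.
  rewrite -hn add1n -mul2n; set M := n./2.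
  have [_ ->] := PEO M.
  rewrite horner_sum big_nat_cond; apply: big_ind; [exact: inZ0 | exact: inZ_add |].
  move=> a /andP [/andP [_ ha] _]; rewrite hornerZ /dF subSS subn0.
  apply: inZ_mul; last exact: inZ_g.
  by apply: inZ_mul; [exact: inZ_qz | apply: inZ_qbin; lia].
move: hn; rewrite add0n -mul2n; case: (n./2) => [|M] <-.
  rewrite muln0 /p_divF /= /qfactF big_geq // invr1 scale1r hornerC; exact: inZ1.
have [-> _] := PEO M.
rewrite horner_sum big_nat_cond; apply: big_ind; [exact: inZ0 | exact: inZ_add |].
move=> a /andP [/andP [_ ha] _]; rewrite hornerZ /cF subSS subn0.
apply: inZ_mul; last exact: inZ_g.
by apply: inZ_mul; [exact: inZ_qz | apply: inZ_qbin; lia].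
Qed.

End Gen.


Lemma qK_neq1 n : (0 < n)%N -> q ^+ n != 1.
Proof.
move=> n0; rewrite /q -tofracXn -tofrac1 tofrac_eq.
apply/eqP=> h; have := congr1 (fun p : {poly rat} => size p) h.
rewrite /= size_polyXn size_poly1.
by case: n n0 h.
Qed.

Lemma qK_neq0 : q != 0.
Proof. by rewrite /q tofrac_eq0 polyX_eq0. Qed.

Theorem proposition2p6 :
  (forall m : nat, (1 <= m)%N ->
     p_div (2 * m)%N =
       \sum_(0 <= a < m)
          (q ^ ((1 - 2 * m%:Z) * a%:Z) * qbin2 (m - 1)%N a) *: g_div (2 * m - 2 * a)%N
     /\
     p_div (2 * m - 1)%N =
       \sum_(0 <= a < m)
          (q ^ ((3 - 2 * m%:Z) * a%:Z) * qbin2 (m - 1)%N a) *: g_div (2 * m - 2 * a - 1)%N)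
  /\
  (forall (n : nat) (l : int), in_Zqqinv (p_div n).[qint (2 * l)]).
Proof.
split; last first.
  move=> n l; exact: (@main2 K q qK_neq0 qK_neq1 n l).
move=> m m1; have [M ->] : exists M, m = M.+1 by exists m.-1; lia.
have [hE hO] := @PEO K q qK_neq0 qK_neq1 M.
rewrite /PE /PO in hE hO.
split.
  transitivity (@p_divF K q (2 * M.+1)); first by [].
  rewrite hE; apply: eq_big_nat => a /andP [_ ha].
  rewrite (_ : (2 * M.+1 - 2 * a = 2 * (M - a).+1)%N); last by lia.
  by [].
transitivity (@p_divF K q (2 * M).+1).
  by rewrite (_ : (2 * M.+1 - 1 = (2 * M).+1)%N); last by lia.
rewrite hO; apply: eq_big_nat => a /andP [_ ha].
rewrite (_ : (2 * M.+1 - 2 * a - 1 = (2 * (M - a)).+1)%N); last by lia.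
by [].
Qed.
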